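(* Assume that $\{Z_i\}_{i\ge 0}$ is a stationary Markov chain on $(\mathsf{Z},\mathcal{Z})$ with Markov kernel $\mathrm{Q}$ and unique invariant distribution $\pi$, and that $\mathrm{Q}$ is uniformly geometrically ergodic with mixing time $\tau\in\mathbb{N}$, i.e. for every $k\in\mathbb{N}$, $$\sup_{z,z'\in\mathsf{Z}}\tfrac12\|\mathrm{Q}^k(z,\cdot)-\mathrm{Q}^k(z',\cdot)\|_{\mathsf{TV}}\le (1/4)^{\lfloor k/\tau\rfloor}.$$ Assume further that for all $x\in\mathbb{R}^d$, $\mathbb{E}_{\pi}[\nabla F(x,Z)]=\nabla f(x)$, and for all $z\in\mathsf{Z}$ and $x\in\mathbb{R}^d$, $$\|\nabla F(x,z)-\nabla f(x)\|^2\le \sigma^2+\delta^2\|\nabla f(x)\|^2 .$$ Then for any $n\ge 1$ and $x\in\mathbb{R}^d$, $$\mathbb{E}_{\pi}\Big[\Big\|\tfrac1n\sum_{i=1}^n\nabla F(x,Z_i)-\nabla f(x)\Big\|^2\Big]\le \frac{8\tau}{n}\big(\sigma^2+\delta^2\|\nabla f(x)\|^2\big),$$ and moreover, for any initial distribution $\xi$ on $(\mathsf{Z},\mathcal{Z})$, $$\mathbb{E}_{\xi}\Big[\Big\|\tfrac1n\sum_{i=1}^n\nabla F(x,Z_i)-\nabla f(x)\Big\|^2\Big]\le \frac{C_1\tau}{n}\big(\sigma^2+\delta^2\|\nabla f(x)\|^2\big),\qquad C_1=16\Big(1+\frac{1}{\ln^2 4}\Big).$$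
   Context: $(\mathsf{Z},\mathcal{Z})$ is a complete separable metric space with its Borel $\sigma$-field. $\mathbb{P}_\xi,\mathbb{E}_\xi$ denote the law and expectation of the Markov chain $(Z_i)$ with kernel $\mathrm{Q}$ started from the initial distribution $\xi$; $\mathbb{E}_\pi$ is the stationary case. $\|\cdot\|_{\mathsf{TV}}$ is the total variation norm of a signed measure. $f:\mathbb{R}^d\to\mathbb{R}$ is defined by $f(x)=\mathbb{E}_{Z\sim\pi}[F(x,Z)]$, where $F(\cdot,z)$ is differentiable for each $z$, and $\sigma\ge0,\delta\ge0$ are constants. *)

(* Defs.v *)
From HB Require Import structures.
From mathcomp Require Import all_boot all_order all_algebra.
From mathcomp Require Import all_classical all_reals all_analysis.
Set Implicit Arguments. Unset Strict Implicit. Unset Printing Implicit Defensive.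
Import Order.TTheory GRing.Theory Num.Theory.
Import numFieldNormedType.Exports.
Local Open Scope classical_set_scope.
Local Open Scope ring_scope.

Section MC.
Context {R : realType} {dT : measure_display} {T : measurableType dT}.

Definition dist_open (dist : T -> T -> R) (A : set T) : Prop :=
  forall x, A x -> exists2 e : R, 0 < e & forall y, dist x y < e -> A y.

Definition polish_borel (dist : T -> T -> R) : Prop :=
  [/\ (forall x y, dist x y = 0 <-> x = y) /\
      (forall x y, dist x y = dist y x),
      (forall x y z, dist x z <= dist x y + dist y z),
      (forall u : nat -> T,
          (forall e : R, 0 < e -> exists N, forall m n, (N <= m)%N -> (N <= n)%N ->
              dist (u m) (u n) < e) ->
          exists l, forall e : R, 0 < e -> exists N, forall n, (N <= n)%N -> dist (u n) l < e),
      (exists s : nat -> T, forall x (e : R), 0 < e -> exists k, dist x (s k) < e) &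
      (forall A : set T, measurable A <-> <<s dist_open dist >> A)].

Fixpoint kpow (Q : R.-pker T ~> T) (k : nat) (z : T) : set T -> \bar R :=
  match k with
  | 0%N => fun A => \d_z A
  | k'.+1 => fun A => (\int[Q z]_y kpow Q k' y A)%E
  end.

Definition tv_norm (mu nu : set T -> \bar R) : \bar R :=
  ereal_sup [set r | exists (n : nat) (A : nat -> set T),
     [/\ (forall i, measurable (A i)), trivIset `I_n A,
         \bigcup_(i in `I_n) A i = setT &
         r = (\sum_(i < n) `|mu (A i) - nu (A i)|)%E]].

Definition kinvariant (Q : R.-pker T ~> T) (pi : probability T R) : Prop :=
  forall A, measurable A -> (\int[pi]_z Q z A)%E = pi A.

(* E_xi [ g(Z_0, ..., Z_n) ] for the Markov chain with kernel Q and initial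
   distribution xi; g receives the path j |-> Z_j (only j <= n is relevant) *)
Fixpoint mexp (Q : R.-pker T ~> T) (n : nat) (g : (nat -> T) -> \bar R)
    (p : nat -> T) (k : nat) (z : T) : \bar R :=
  let p' := fun j => if j == k then z else p j in
  match n with
  | 0%N => g p'
  | m.+1 => (\int[Q z]_y mexp Q m g p' k.+1 y)%E
  end.

Definition chain_expect (Q : R.-pker T ~> T) (xi : probability T R) (n : nat)
    (g : (nat -> T) -> \bar R) : \bar R :=
  (\int[xi]_z mexp Q n g (fun _ => z) 0 z)%E.

End MC.

Section Grad.
Context {R : realType} {d : nat}.
Definition grad (g : 'rV[R]_d -> R) (x : 'rV[R]_d) : 'rV[R]_d :=
  \row_(i < d) derive g x (delta_mx 0 i).
Definition sqnorm (v : 'rV[R]_d) : R := \sum_(i < d) (v 0 i) ^+ 2.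
End Grad.

(* Main.v *)
Require Import Defs.
From HB Require Import structures.
From mathcomp Require Import all_boot all_order all_algebra.
From mathcomp Require Import all_classical all_reals all_analysis.
From mathcomp Require Import measurable_realfun.
From mathcomp Require Import ring lra zify.
Import Order.TTheory GRing.Theory Num.Theory.
Import numFieldNormedType.Exports.
Local Open Scope classical_set_scope.
Local Open Scope ring_scope.
Set Implicit Arguments. Unset Strict Implicit.
Section P1.
Context {R : realType} {dT : measure_display} {T : measurableType dT}.

Lemma mono_int (mu : {measure set T -> \bar R}) (f g : T -> \bar R) :
  (forall x, 0 <= f x)%E -> (forall x, f x <= g x)%E ->
  (\int[mu]_x f x <= \int[mu]_x g x)%E.
Proof.
move=> f0 fg.
have g0 x : (0 <= g x)%E by apply: le_trans (fg x).
rewrite !ge0_integralTE//.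
apply: ereal_sup_le => _ [h hf <-]; exists h => //= x; exact: le_trans (fg x).
Qed.

Definition bm (phi : T -> R) :=
  measurable_fun setT phi /\ exists M, forall z, `|phi z| <= M.

Definition Ip (mu : {measure set T -> \bar R}) (phi : T -> R) :=
  fine (\int[mu]_z (phi z)%:E)%E.

Variable mu : {measure set T -> \bar R}.
Hypothesis mu1 : mu setT = 1%E.

Lemma bm_int phi : bm phi -> mu.-integrable setT (EFin \o phi).
Proof.
move=> [mphi [M hM]]; apply/integrableP; split.
  exact/measurable_EFinP.
apply: (@le_lt_trans _ _ (\int[mu]_x (cst M%:E x))%E).
  apply: mono_int => x //=; rewrite lee_fin; exact: hM.
by rewrite integral_cst// mu1 mule1 ltry.
Qed.

Lemma IpE phi : bm phi -> (\int[mu]_z (phi z)%:E)%E = (Ip mu phi)%:E.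
Proof. by move=> b; rewrite /Ip fineK//; apply: integrable_fin_num => //; exact: bm_int. Qed.

Lemma bm_cst c : bm (fun _ => c).
Proof. split; [exact: measurable_cst | by exists `|c|]. Qed.

Lemma bmD f g : bm f -> bm g -> bm (fun z => f z + g z).
Proof.
move=> [mf [M hM]] [mg [N hN]]; split; first exact: measurable_funD.
exists (M + N) => z; apply: le_trans (ler_normD _ _) _; exact: lerD.
Qed.

Lemma bmZ c f : bm f -> bm (fun z => c * f z).
Proof.
move=> [mf [M hM]]; split; first exact: measurable_funM (measurable_cst _) mf.
exists (`|c| * M) => z; rewrite normrM; apply: ler_wpM2l => //.
Qed.

Lemma bmB f g : bm f -> bm g -> bm (fun z => f z - g z).
Proof.
move=> bf bg; rewrite (_ : (fun z => f z - g z) = (fun z => f z + (-1) * g z)).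
  exact: bmD bf (bmZ _ bg).
by apply/funext => z; rewrite mulN1r.
Qed.

Lemma bm_sum (I : Type) (s : seq I) (F : I -> T -> R) :
  (forall i, bm (F i)) -> bm (fun z => \sum_(i <- s) F i z).
Proof.
move=> bF; elim: s => [|a s IH].
  by under eq_fun do rewrite big_nil; exact: bm_cst.
by under eq_fun do rewrite big_cons; exact: bmD.
Qed.

Lemma bm_indic A : measurable A -> bm (\1_A).
Proof.
move=> mA; split; first exact: measurable_indic.
exists 1 => z; rewrite /indic; case: (_ \in _) => /=; by rewrite ?normr0 ?normr1.
Qed.

Lemma Ip_cst c : Ip mu (fun _ => c) = c.
Proof. by rewrite /Ip integral_cst// mu1 mule1. Qed.

Lemma IpD f g : bm f -> bm g -> Ip mu (fun z => f z + g z) = Ip mu f + Ip mu g.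
Proof.
move=> bf bg; apply: EFin_inj; rewrite -IpE; last exact: bmD.
rewrite EFinD -!IpE//.
under eq_integral do rewrite EFinD.
by rewrite integralD//; exact: bm_int.
Qed.

Lemma IpZ c f : bm f -> Ip mu (fun z => c * f z) = c * Ip mu f.
Proof.
move=> bf; apply: EFin_inj; rewrite -IpE; last exact: bmZ.
rewrite EFinM -!IpE//.
under eq_integral do rewrite EFinM.
by rewrite integralZl//; exact: bm_int.
Qed.

Lemma IpB f g : bm f -> bm g -> Ip mu (fun z => f z - g z) = Ip mu f - Ip mu g.
Proof.
move=> bf bg; rewrite (_ : (fun z => f z - g z) = (fun z => f z + (-1) * g z)).
  by rewrite IpD ?IpZ ?mulN1r//; exact: bmZ.
by apply/funext => z; rewrite mulN1r.
Qed.

Lemma Ip_sum (I : Type) (s : seq I) (F : I -> T -> R) :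
  (forall i, bm (F i)) -> Ip mu (fun z => \sum_(i <- s) F i z) = \sum_(i <- s) Ip mu (F i).
Proof.
move=> bF; elim: s => [|a s IH].
  by under eq_fun do rewrite big_nil; rewrite big_nil Ip_cst.
under eq_fun do rewrite big_cons.
by rewrite IpD ?IH ?big_cons//; exact: bm_sum.
Qed.

Lemma Ip_le f g : bm f -> bm g -> (forall z, f z <= g z) -> Ip mu f <= Ip mu g.
Proof.
move=> bf bg fg; rewrite -lee_fin -!IpE//.
apply: le_integral => //; try exact: bm_int.
by move=> z _; rewrite lee_fin.
Qed.

Lemma Ip_abs f M : bm f -> (forall z, `|f z| <= M) -> `|Ip mu f| <= M.
Proof.
move=> bf hM; rewrite ler_norml; apply/andP; split.
  rewrite -(Ip_cst (- M)); apply: Ip_le => //; first exact: bm_cst.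
  by move=> z; have := hM z; rewrite ler_norml => /andP[].
rewrite -(Ip_cst M); apply: Ip_le => //; first exact: bm_cst.
by move=> z; have := hM z; rewrite ler_norml => /andP[].
Qed.

Lemma Ip_indic A : measurable A -> Ip mu (\1_A) = fine (mu A).
Proof. by move=> mA; rewrite /Ip integral_indic// setIT. Qed.

End P1.
Section P2.
Context {R : realType} {dT : measure_display} {T : measurableType dT}.
Variable Q : R.-pker T ~> T.

Definition Pr (phi : T -> R) z := Ip (Q z) phi.
Fixpoint Pk k (phi : T -> R) := if k is k'.+1 then Pr (Pk k' phi) else phi.

Let Q1 z : Q z setT = 1%E. Proof. exact: prob_kernel. Qed.

Lemma Pr_abs phi M : bm phi -> (forall z, `|phi z| <= M) -> forall z, `|Pr phi z| <= M.
Proof. by move=> b hM z; apply: Ip_abs. Qed.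

Lemma Pr_bm phi : bm phi -> bm (Pr phi).
Proof.
move=> b; have [mphi [M hM]] := b; split; last by exists M; exact: Pr_abs.
have bM : bm (fun y => phi y + M) by apply: bmD => //; exact: bm_cst.
have -> : Pr phi = (fun z => Pr (fun y => phi y + M) z - M).
  by apply/funext => z; rewrite /Pr IpD ?Ip_cst ?addrK//; exact: bm_cst.
apply: measurable_funB; last exact: measurable_cst.
rewrite /Pr /Ip.
apply: (measurableT_comp (fine_measurable measurableT)).
apply: (measurable_fun_integral_kernel (l := Q)).
- exact: measurable_kernel.
- move=> y; rewrite lee_fin -lerBlDr sub0r; have := hM y.
  by rewrite ler_norml => /andP[].
- apply/measurable_EFinP; exact: measurable_funD.
Qed.

Lemma PrD f g : bm f -> bm g -> Pr (fun y => f y + g y) = (fun z => Pr f z + Pr g z).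
Proof. by move=> bf bg; apply/funext => z; rewrite /Pr IpD. Qed.

Lemma PrZ c f : bm f -> Pr (fun y => c * f y) = (fun z => c * Pr f z).
Proof. by move=> bf; apply/funext => z; rewrite /Pr IpZ. Qed.

Lemma Pr_sum (I : Type) (s : seq I) (F : I -> T -> R) :
  (forall i, bm (F i)) ->
  Pr (fun y => \sum_(i <- s) F i y) = (fun z => \sum_(i <- s) Pr (F i) z).
Proof. by move=> bF; apply/funext => z; rewrite /Pr Ip_sum. Qed.

Lemma Pk_bm k phi : bm phi -> bm (Pk k phi).
Proof. by move=> b; elim: k => //= k IH; exact: Pr_bm. Qed.

Lemma Pk_abs k phi M : bm phi -> (forall z, `|phi z| <= M) -> forall z, `|Pk k phi z| <= M.
Proof.
move=> b hM; elim: k => //= k IH; apply: Pr_abs => //; exact: Pk_bm.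
Qed.

Lemma PkD k f g : bm f -> bm g -> Pk k (fun y => f y + g y) = (fun z => Pk k f z + Pk k g z).
Proof.
move=> bf bg; elim: k => //= k ->; apply: PrD; exact: Pk_bm.
Qed.

Lemma PkZ k c f : bm f -> Pk k (fun y => c * f y) = (fun z => c * Pk k f z).
Proof. move=> bf; elim: k => //= k ->; apply: PrZ; exact: Pk_bm. Qed.

Lemma Pk_sum k (I : Type) (s : seq I) (F : I -> T -> R) :
  (forall i, bm (F i)) ->
  Pk k (fun y => \sum_(i <- s) F i y) = (fun z => \sum_(i <- s) Pk k (F i) z).
Proof.
move=> bF; elim: k => //= k ->; apply: Pr_sum => i; exact: Pk_bm.
Qed.

Lemma Pk_cst k c : Pk k (fun _ => c) = (fun _ => c).
Proof. elim: k => //= k ->; apply/funext => z; rewrite /Pr Ip_cst//. Qed.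

Lemma kpowE k z A : measurable A -> kpow Q k z A = (Pk k (\1_A) z)%:E.
Proof.
move=> mA; elim: k z => [|k IH] z /=.
  by rewrite diracE /indic.
under eq_integral do rewrite IH.
by rewrite IpE//; apply: Pk_bm; exact: bm_indic.
Qed.

End P2.

Section P3.
Context {R : realType} {dT : measure_display} {T : measurableType dT}.

Lemma approx (phi : T -> R) (M e : R) : bm phi -> 0 <= M -> (forall z, `|phi z| <= M) -> 0 < e ->
  exists N (A : nat -> set T) (c : nat -> R),
  [/\ (forall j, measurable (A j)), trivIset `I_N A, \bigcup_(j in `I_N) A j = setT,
      (forall j, `|c j| <= M) &
      forall z, `|phi z - \sum_(j < N) c j * \1_(A j) z| <= e].
Proof.
move=> [mphi _] M0 hM e0.
have pos z : 0 <= (phi z + M) / e.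
  apply: divr_ge0 (ltW e0); rewrite -lerBlDr sub0r; have := hM z.
  by rewrite ler_norml => /andP[].
have h2M : 0 <= 2 * M / e by apply: divr_ge0 (ltW e0); rewrite mulr_ge0.
move: (Num.trunc (2 * M / e)).+1 (truncn_itv h2M) => N hN.
have [A defA] : {A : nat -> set T | A = fun j => [set z | j%:R * e <= phi z + M < j.+1%:R * e]}.
  by eexists.
have [c defc] : {c : nat -> R | c = fun j => Num.min (j%:R * e - M) M} by eexists.
have [idx defidx] : {idx : T -> nat | idx = fun z => Num.trunc ((phi z + M) / e)} by eexists.
have uniq i j z : A i z -> A j z -> i = j.
  rewrite defA /= => /andP[hi1 hi2] /andP[hj1 hj2].
  have h1 : (i < j.+1)%N.
    have : i%:R * e < j.+1%:R * e by apply: le_lt_trans hi1 hj2.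
    rewrite (ltr_pM2r e0) ltr_nat; exact: id.
  have h2 : (j < i.+1)%N.
    have : j%:R * e < i.+1%:R * e by apply: le_lt_trans hj1 hi2.
    rewrite (ltr_pM2r e0) ltr_nat; exact: id.
  lia.
have inA z : A (idx z) z.
  have := truncn_itv (pos z); rewrite defidx defA /= => /andP[h1 h2].
  rewrite -ler_pdivlMr// -ltr_pdivrMr// h1 h2; exact: isT.
have idxN z : (idx z < N)%N.
  rewrite -(ltr_nat R); apply: (le_lt_trans _ (andP hN).2).
  rewrite defidx; apply: (le_trans (andP (truncn_itv (pos z))).1).
  apply: ler_wpM2r; first by rewrite invr_ge0 ltW.
  have := hM z; rewrite ler_norml => /andP[_ h]; lra.
have ineq z : (idx z)%:R * e <= phi z + M < (idx z).+1%:R * e by have := inA z; rewrite defA.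
exists N, A, c; split.
- move=> j; rewrite (_ : A j = phi @^-1` `[j%:R*e - M, j.+1%:R*e - M[%classic).
    rewrite -[X in measurable X]setTI; apply: mphi => //; exact: measurable_itv.
  rewrite defA; apply/seteqP; split => z /=; rewrite in_itv /= lerBlDr ltrBrDr; exact: id.
- move=> i j _ _ [z [hi hj]]; exact: uniq i j z hi hj.
- apply/seteqP; split => // z _; exists (idx z) => //=; exact: inA.
- move=> j; rewrite defc ler_norml; apply/andP; split.
    rewrite le_min; apply/andP; split; last lra.
    have : 0 <= j%:R * e by rewrite mulr_ge0 // ltW.
    lra.
  rewrite ge_min; apply/orP; right; exact: lexx.
- move=> z; rewrite (bigD1 (Ordinal (idxN z))) //= big1 => [|j hj]; last first.
    rewrite /indic (_ : (z \in A j) = false) ?mulr0 //.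
    apply/negbTE/negP; rewrite inE => hz; have := uniq _ _ _ hz (inA z) => hji.
    by move/eqP: hj; apply; apply: val_inj.
  rewrite /indic mem_set ?mulr1 ?addr0; last exact: inA.
  have := ineq z => /andP[h1 h2].
  have := hM z; rewrite ler_norml => /andP[h3 h4].
  rewrite defc min_l; last lra.
  rewrite ler_norml; apply/andP; split; lra.
Qed.

End P3.

Section P4.
Context {R : realType} {dT : measure_display} {T : measurableType dT}.
Variable Q : R.-pker T ~> T.

Lemma PkB k f g : bm f -> bm g -> Pk Q k (fun y => f y - g y) = (fun z => Pk Q k f z - Pk Q k g z).
Proof.
move=> bf bg; rewrite (_ : (fun y => f y - g y) = (fun y => f y + (-1) * g y)).
  rewrite PkD ?PkZ//; last exact: bmZ.
  by apply/funext => z; rewrite mulN1r.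
by apply/funext => z; rewrite mulN1r.
Qed.

Lemma tv_bound k y y' (phi : T -> R) M r : bm phi -> 0 <= M -> (forall z, `|phi z| <= M) ->
  (tv_norm (kpow Q k y) (kpow Q k y') <= r%:E)%E ->
  `|Pk Q k phi y - Pk Q k phi y'| <= M * r.
Proof.
move=> bphi M0 hM htv; apply/ler_addgt0Pr => e e0.
have e20 : 0 < e / 2 by rewrite divr_gt0.
have [N [A [c [mA tA cA cc hap]]]] := approx bphi M0 hM e20.
pose s := fun z => \sum_(j < N) c j * \1_(A j) z.
have bs : bm s by apply: bm_sum => j; apply: bmZ; exact: bm_indic.
have b1 j : bm (\1_(A j) : T -> R) by exact: bm_indic.
have e1 : `|Pk Q k (fun z => phi z - s z) y - Pk Q k (fun z => phi z - s z) y'| <= e.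
  apply: le_trans (ler_normB _ _) _.
  rewrite (splitr e); apply: lerD; apply: Pk_abs => //; exact: bmB.
have Pks : Pk Q k s = fun z => \sum_(j < N) c j * Pk Q k (\1_(A j)) z.
  rewrite /s Pk_sum; last by move=> j; apply: bmZ.
  by apply/funext => z; apply: eq_bigr => j _; rewrite PkZ.
have e2 : `|Pk Q k s y - Pk Q k s y'| <= M * r.
  rewrite Pks -sumrB.
  apply: le_trans (ler_norm_sum _ _ _) _.
  apply: (@le_trans _ _ (\sum_(j < N) M * `|Pk Q k (\1_(A j)) y - Pk Q k (\1_(A j)) y'|)).
    apply: ler_sum => j _; rewrite -mulrBr normrM; apply: ler_wpM2r => //.
  rewrite -mulr_sumr; apply: ler_wpM2l => //.
  rewrite -lee_fin; apply: le_trans htv.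
  rewrite -sumEFin; apply: ereal_sup_ubound; exists N, A; split => //.
  by apply: eq_bigr => j _; rewrite !kpowE// -EFinB.
rewrite PkB// in e1.
have -> : Pk Q k phi y - Pk Q k phi y' =
  (Pk Q k phi y - Pk Q k s y - (Pk Q k phi y' - Pk Q k s y')) + (Pk Q k s y - Pk Q k s y').
  by ring.
apply: le_trans (ler_normD _ _) _; rewrite addrC; exact: lerD.
Qed.

Lemma Pr_indicE z A : measurable A -> Q z A = (Pr Q (\1_A) z)%:E.
Proof.
move=> mA; rewrite /Pr -IpE; last exact: bm_indic.
  by rewrite integral_indic// setIT.
exact: prob_kernel.
Qed.

Lemma invariance (pi : probability T R) phi : kinvariant Q pi -> bm phi ->
  Ip pi (Pr Q phi) = Ip pi phi.
Proof.
move=> inv bphi; have pi1 := probability_setT pi.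
have [mphi [M hM]] := bphi.
have M0 : 0 <= `|M| by [].
have {}hM z : `|phi z| <= `|M| by apply: le_trans (hM z) (ler_norm M).
apply/eqP; rewrite -subr_eq0 -normr_le0; apply/ler_addgt0Pr => e e0; rewrite add0r.
have e20 : 0 < e / 2 by rewrite divr_gt0.
have [N [A [c [mA tA cA cc hap]]]] := approx bphi M0 hM e20.
pose s := fun z => \sum_(j < N) c j * \1_(A j) z.
have b1 j : bm (\1_(A j) : T -> R) by exact: bm_indic.
have bs : bm s by apply: bm_sum => j; apply: bmZ; exact: bm_indic.
have bsj : forall j, bm (fun z => c j * \1_(A j) z) by move=> j; apply: bmZ.
have bP j : bm (Pr Q (\1_(A j))) by exact: Pr_bm.
have Ps : Ip pi (Pr Q s) = Ip pi s.
  rewrite /s Pr_sum // Ip_sum //; last by move=> j; apply: Pr_bm.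
  rewrite Ip_sum //; apply: eq_bigr => j _.
  rewrite PrZ // !IpZ //; congr (_ * _).
  rewrite Ip_indic//.
  transitivity (fine (\int[pi]_z Q z (A j))%E); last by congr fine; exact: inv _ (mA j).
  congr fine.
  apply: eq_integral => z _; exact: esym (Pr_indicE z (mA j)).
have bd : bm (fun z => phi z - s z) by exact: bmB.
have h1 : `|Ip pi (Pr Q (fun z => phi z - s z))| <= e / 2.
  by apply: Ip_abs => //; [exact: Pr_bm | apply: Pr_abs].
have h2 : `|Ip pi (fun z => phi z - s z)| <= e / 2 by apply: Ip_abs.
have e1 : Pr Q (fun z => phi z - s z) = (fun z => Pr Q phi z - Pr Q s z) := PkB 1 bphi bs.
rewrite e1 (IpB pi1 (Pr_bm Q bphi) (Pr_bm Q bs)) in h1.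
rewrite (IpB pi1 bphi bs) in h2.
rewrite Ps in h1.
have -> : Ip pi (Pr Q phi) - Ip pi phi = (Ip pi (Pr Q phi) - Ip pi s) - (Ip pi phi - Ip pi s) by ring.
apply: le_trans (ler_normB _ _) _; rewrite (splitr e); exact: lerD.
Qed.
End P4.


Section P5.
Context {R : realType}.

Lemma eqle (x y : R) : x = y -> x <= y. Proof. by move=> ->. Qed.

Lemma modS_cases (N t : nat) : (0 < t)%N ->
  (N.+1 %/ t = N %/ t /\ N.+1 %% t = (N %% t).+1)%N \/
  (N.+1 %/ t = (N %/ t).+1 /\ N.+1 %% t = 0 /\ (N %% t).+1 = t)%N.
Proof.
move=> t0; rewrite divnS // modnS; case: (boolP (t %| N.+1)%N) => hd /=.
  right; split; first by rewrite add1n.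
  split => //.
  have h : ((N %% t).+1 %% t = 0)%N.
    rewrite -addn1 modnDml addn1 modnS hd //.
  have := ltn_pmod N t0; rewrite leq_eqVlt => /orP[/eqP -> //|hlt].
  by rewrite modn_small in h.
by left; rewrite add0n.
Qed.

Lemma geom_sum (t : nat) N : (0 < t)%N ->
  \sum_(0 <= i < N) ((4%:R : R)^-1) ^+ (i %/ t) <= 4 * t%:R / 3.
Proof.
move=> t0; set r : R := 4%:R^-1; set C : R := 4 * t%:R / 3.
suff : \sum_(0 <= i < N) r ^+ (i %/ t) <= C - (C - (N %% t)%:R) * r ^+ (N %/ t).
  move=> h; apply: le_trans h _; rewrite lerBlDr lerDl; apply: mulr_ge0.
    rewrite subr_ge0 /C; have : ((N %% t)%:R : R) <= t%:R.
      by rewrite ler_nat ltnW // ltn_pmod.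
    have : (0 : R) <= t%:R by [].
    lra.
  by rewrite exprn_ge0 // /r invr_ge0.
elim: N => [|N IH].
  by rewrite big_geq // mod0n div0n expr0 mulr1 subr0 subrr.
rewrite big_nat_recr //=.
have r0 : 0 <= r ^+ (N %/ t) by rewrite exprn_ge0 // /r invr_ge0.
case: (modS_cases N t0) => [[-> ->]|[-> [-> ht]]].
  apply: le_trans (lerD IH (lexx _)) _.
  rewrite -natr1; apply: eqle; ring.
apply: le_trans (lerD IH (lexx _)) _.
move: (N %/ t)%N (N %% t)%N ht r0 => a b hb ra.
have tR : (t%:R : R) = b%:R + 1 by rewrite -hb -natr1.
rewrite exprS /C tR subr0 /r; apply: eqle; field; exact: isT.
Qed.

Lemma amgm1 (l u v : R) : 0 < l -> 2 * (u * v) <= l * u ^+ 2 + v ^+ 2 / l.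
Proof.
move=> l0.
have h : l * u ^+ 2 + v ^+ 2 / l - 2 * (u * v) = (l * u - v) ^+ 2 / l.
  by field; rewrite gt_eqF.
rewrite -subr_ge0 h; apply: divr_ge0; [exact: sqr_ge0 | exact: ltW].
Qed.

Lemma amgm d (l : R) (u v : 'I_d -> R) : 0 < l ->
  2 * `|\sum_j u j * v j| <= l * \sum_j u j ^+ 2 + (\sum_j v j ^+ 2) / l.
Proof.
move=> l0; have key (w : 'I_d -> R) : 2 * (\sum_j u j * w j) <= l * \sum_j u j ^+ 2 + (\sum_j w j ^+ 2) / l.
  rewrite mulr_sumr mulr_sumr mulr_suml -big_split; apply: ler_sum => j _; exact: amgm1.
case: (lerP 0 (\sum_j u j * v j)) => h.
  rewrite ger0_norm //; exact: key.
rewrite ltr0_norm // -sumrN.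
have e1 : \sum_j (- (u j * v j)) = \sum_j u j * (- v j) by apply: eq_bigr => j _; rewrite mulrN.
have e2 : \sum_j (- v j)^+2 = \sum_j v j ^+ 2 by apply: eq_bigr => j _; rewrite sqrrN.
rewrite e1 -e2; exact: key.
Qed.

End P5.


Section P6.
Context {R : realType} {dT : measure_display} {T : measurableType dT}.
Variable Q : R.-pker T ~> T.
Variable pi : probability T R.
Hypothesis inv : kinvariant Q pi.
Variable tau : nat.
Hypothesis mix : forall (k : nat) (z z' : T),
     ((2%:R^-1)%:E * tv_norm (kpow Q k z) (kpow Q k z') <=
       ((4%:R^-1) ^+ (k %/ tau))%:E)%E.

Lemma tv_le (t : \bar R) (q : R) : ((2%:R^-1)%:E * t <= q%:E)%E -> (t <= (2 * q)%:E)%E.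
Proof.
case: t => [x| |] /=.
- rewrite !lee_fin => h; lra.
- rewrite mulry gtr0_sg ?invr_gt0 ?ltr0n // mul1e leye_eq => /eqP h; discriminate h.
- by rewrite leNye.
Qed.

Lemma Pk_inv k phi : bm phi -> Ip pi (Pk Q k phi) = Ip pi phi.
Proof.
move=> b; elim: k => //= k IH; rewrite invariance //; exact: Pk_bm.
Qed.

Lemma decay d (H : 'I_d -> T -> R) (B : R) k y :
  (forall j, bm (H j)) -> (forall j, Ip pi (H j) = 0) -> 0 <= B ->
  (forall z, \sum_j (H j z) ^+ 2 <= B) ->
  \sum_j (Pk Q k (H j) y) ^+ 2 <= 4 * ((4%:R^-1) ^+ (k %/ tau)) ^+ 2 * B.
Proof.
move=> bH H0 B0 HB.
have pi1 := probability_setT pi.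
set q : R := (4%:R^-1) ^+ (k %/ tau).
have q0 : 0 < q by rewrite exprn_gt0 // invr_gt0 ltr0n.
set v := fun j => Pk Q k (H j) y.
set S := \sum_j v j ^+ 2.
have S0 : 0 <= S by apply: sumr_ge0 => j _; exact: sqr_ge0.
pose phi := fun z => \sum_j v j * H j z.
have bphi : bm phi by apply: bm_sum => j; exact: bmZ.
have Pkphi : Pk Q k phi = fun z => \sum_j v j * Pk Q k (H j) z.
  rewrite /phi Pk_sum; last by move=> j; apply: bmZ.
  by apply/funext => z; apply: eq_bigr => j _; rewrite PkZ.
pose Mp := ((2 * q)^-1 * S + 2 * q * B) / 2.
have hM z : `|phi z| <= Mp.
  have l0 : 0 < (2 * q)^-1 by rewrite invr_gt0 mulr_gt0.
  have h1 : 2 * `|phi z| <= (2 * q)^-1 * S + (\sum_j H j z ^+ 2) / (2 * q)^-1.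
    exact: amgm v (fun j => H j z) l0.
  have h2 : (\sum_j H j z ^+ 2) / (2 * q)^-1 <= B * (2 * q).
    by rewrite invrK; apply: ler_wpM2r; [rewrite mulr_ge0 // ltW | exact: HB].
  rewrite /Mp; lra.
have M0 : 0 <= Mp.
  rewrite /Mp; apply: divr_ge0 => //; apply: addr_ge0; apply: mulr_ge0 => //.
  - by rewrite invr_ge0 mulr_ge0 // ltW.
  - by rewrite mulr_ge0 // ltW.
have hd z' : `|Pk Q k phi y - Pk Q k phi z'| <= Mp * (2 * q).
  apply: tv_bound => //; apply: tv_le; exact: mix.
have SE : Pk Q k phi y = S.
  by rewrite Pkphi /S; apply: eq_bigr => j _; rewrite expr2.
have Ip0 : Ip pi (Pk Q k phi) = 0.
  rewrite Pk_inv // /phi Ip_sum //; last by move=> j; exact: bmZ.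
  by rewrite big1 // => j _; rewrite IpZ // H0 mulr0.
have SI : S = Ip pi (fun z' => Pk Q k phi y - Pk Q k phi z').
  rewrite IpB //; [|exact: bm_cst|exact: Pk_bm].
  by rewrite Ip0 subr0 Ip_cst // SE.
have hS : S <= Mp * (2 * q).
  rewrite SI; apply: le_trans (ler_norm _) _; apply: Ip_abs => //.
  by apply: bmB; [exact: bm_cst | exact: Pk_bm].
have e : Mp * (2 * q) = S / 2 + 2 * q ^+ 2 * B.
  by rewrite /Mp; field; rewrite gt_eqF.
rewrite e in hS; lra.
Qed.

End P6.


Section P7.
Context {R : realType} {dT : measure_display} {T : measurableType dT}.
Variable Q : R.-pker T ~> T.
Variable pi : probability T R.
Hypothesis inv : kinvariant Q pi.
Variable tau : nat.
Hypothesis tau0 : (0 < tau)%N.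
Hypothesis mix : forall (k : nat) (z z' : T),
     ((2%:R^-1)%:E * tv_norm (kpow Q k z) (kpow Q k z') <=
       ((4%:R^-1) ^+ (k %/ tau))%:E)%E.
Variable d : nat.
Variable H : 'I_d -> T -> R.
Variable B : R.
Hypothesis bH : forall j, bm (H j).
Hypothesis H0 : forall j, Ip pi (H j) = 0.
Hypothesis B0 : 0 <= B.
Hypothesis HB : forall z, \sum_j (H j z) ^+ 2 <= B.

Let Q1 z : Q z setT = 1%E. Proof. exact: prob_kernel. Qed.

Let q i : R := (4%:R^-1) ^+ (i %/ tau).

Definition Am m j y := \sum_(1 <= i < m.+1) Pk Q i (H j) y.

Lemma bAm m j : bm (Am m j).
Proof. by apply: bm_sum => i; exact: Pk_bm. Qed.

Lemma cross m y : 2 * \sum_j H j y * Am m j y <= 4 * B * \sum_(1 <= i < m.+1) q i.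
Proof.
rewrite /Am.
under eq_bigr do rewrite mulr_sumr.
rewrite exchange_big /= mulr_sumr mulr_sumr; apply: ler_sum => i _.
have q0 : 0 < q i by rewrite exprn_gt0 // invr_gt0 ltr0n.
have l0 : 0 < 2 * q i by rewrite mulr_gt0.
have h1 := amgm (fun j => H j y) (fun j => Pk Q i (H j) y) l0.
have h2 : 2 * q i * \sum_j H j y ^+ 2 <= 2 * q i * B by apply: ler_wpM2l; [exact: ltW | exact: HB].
have h3 : (\sum_j Pk Q i (H j) y ^+ 2) / (2 * q i) <= (4 * q i ^+ 2 * B) / (2 * q i).
  apply: ler_wpM2r; first by rewrite invr_ge0 ltW.
  rewrite /q; apply: (decay inv mix) => //.
have e3 : (4 * q i ^+ 2 * B) / (2 * q i) = 2 * q i * B by field; rewrite gt_eqF.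
rewrite e3 in h3.
have := ler_norm (\sum_j H j y * Pk Q i (H j) y).
move: h1 h2 h3; set X := `| _ |; set Y := \sum_j _ * _; lra.
Qed.

Lemma Ip_aff (mu : {measure set T -> \bar R}) (mu1 : mu setT = 1%E) a (b : 'I_d -> R) (F : 'I_d -> T -> R) :
  (forall j, bm (F j)) ->
  Ip mu (fun y => a + \sum_j b j * F j y) = a + \sum_j b j * Ip mu (F j).
Proof.
move=> bF; rewrite IpD //; [|exact: bm_cst|by apply: bm_sum => j; exact: bmZ].
rewrite Ip_cst // Ip_sum //; last by move=> j; exact: bmZ.
by congr (_ + _); apply: eq_bigr => j _; rewrite IpZ.
Qed.

Lemma Am_step m j z : Pr Q (H j) z + Pr Q (Am m j) z = Am m.+1 j z.
Proof.
rewrite /Am [in RHS]big_nat_recl // /Pr.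
congr (_ + _).
rewrite -/(Pr Q _ z) Pr_sum //; last by move=> i; exact: Pk_bm.
Qed.


Lemma Qs_le m : \sum_(1 <= i < m.+1) q i <= 4 * tau%:R / 3.
Proof.
apply: le_trans (geom_sum (R:=R) (t:=tau) m.+1 tau0).
rewrite (big_ltn (m := 0%N)) //= lerDr /q; exact: exprn_ge0.
Qed.

Variable n : nat.
Hypothesis n1 : (1 <= n)%N.
Variable g : (nat -> T) -> \bar R.
Hypothesis hg : forall p, g p = ((n%:R ^+ 2)^-1 * \sum_j (\sum_(1 <= i < n.+1) H j (p i)) ^+ 2)%:E.

Definition Phi m (s : 'I_d -> R) y := (n%:R ^+ 2)^-1 *
  (\sum_j s j ^+ 2 + 2 * \sum_j s j * Am m j y + m%:R * (8 * tau%:R * B)).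
Definition upd (p : nat -> T) k z := fun l => if l == k then z else p l.
Definition Sv p k z j := \sum_(1 <= i < k.+1) H j (upd p k z i).

Lemma mexp_ge0 m p k z : (0 <= mexp Q m g p k z)%E.
Proof.
elim: m p k z => [|m IH] p k z /=.
  rewrite hg lee_fin; apply: mulr_ge0; first by rewrite invr_ge0.
  by apply: sumr_ge0 => j _; exact: sqr_ge0.
by apply: integral_ge0 => y _; exact: IH.
Qed.

Lemma Sv_step p k z y j : Sv (upd p k z) k.+1 y j = Sv p k z j + H j y.
Proof.
rewrite /Sv big_nat_recr //=; congr (_ + _); last by rewrite /upd eqxx.
apply: eq_big_nat => i /andP[_ hi]; rewrite /upd.
by rewrite (ltn_eqF hi).
Qed.

Let c := (n%:R ^+ 2 : R)^-1.
Let c0 : 0 <= c. Proof. by rewrite /c invr_ge0. Qed.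

Lemma step2 m (s : 'I_d -> R) y :
  Phi m (fun j => s j + H j y) y <=
  c * (\sum_j s j ^+ 2 + B + 4 * B * \sum_(1 <= i < m.+1) q i + m%:R * (8 * tau%:R * B))
  + \sum_j (2 * c * s j) * (H j y + Am m j y).
Proof.
have E1 : \sum_j (s j + H j y) ^+ 2 = \sum_j s j ^+ 2 + 2 * \sum_j s j * H j y + \sum_j H j y ^+ 2.
  by rewrite mulr_sumr -!big_split; apply: eq_bigr => j _ /=; ring.
have E2 : \sum_j (s j + H j y) * Am m j y = \sum_j s j * Am m j y + \sum_j H j y * Am m j y.
  by rewrite -!big_split; apply: eq_bigr => j _ /=; ring.
have E3 : \sum_j (2 * c * s j) * (H j y + Am m j y) =
    2 * c * (\sum_j s j * H j y + \sum_j s j * Am m j y).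
  by rewrite -big_split mulr_sumr; apply: eq_bigr => j _ /=; ring.
rewrite /Phi -/c E1 E2 E3.
move: (cross m y) (HB y).
set X1 := \sum_j s j ^+ 2; set X2 := \sum_j s j * H j y; set X3 := \sum_j H j y ^+ 2.
set X4 := \sum_j s j * Am m j y; set X5 := \sum_j H j y * Am m j y.
set Qs := \sum_(1 <= i < m.+1) q i.
set K := m%:R * (8 * tau%:R * B).
have -> : c * (X1 + B + 4 * B * Qs + K) + 2 * c * (X2 + X4) =
   c * (X1 + B + 4 * B * Qs + K + 2 * (X2 + X4)) by ring.
move=> hc hb; apply: ler_wpM2l => //; lra.
Qed.

Lemma step4 m (s : 'I_d -> R) z :
  c * (\sum_j s j ^+ 2 + B + 4 * B * \sum_(1 <= i < m.+1) q i + m%:R * (8 * tau%:R * B))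
  + \sum_j (2 * c * s j) * Am m.+1 j z <= Phi m.+1 s z.
Proof.
have E3 : \sum_j (2 * c * s j) * Am m.+1 j z = 2 * c * \sum_j s j * Am m.+1 j z.
  by rewrite mulr_sumr; apply: eq_bigr => j _ /=; ring.
rewrite /Phi -/c E3.
set X1 := \sum_j s j ^+ 2; set X4 := \sum_j s j * Am m.+1 j z.
have hQ := Qs_le m.
set Qs := \sum_(1 <= i < m.+1) q i in hQ *.
have t1 : 1 <= (tau%:R : R) by rewrite ler1n.
have hQ' : 1 + 4 * Qs <= 8 * tau%:R by lra.
have hB := ler_wpM2l B0 hQ'.
have -> : (m.+1)%:R = (m%:R : R) + 1 by rewrite -natr1.
have -> : c * (X1 + B + 4 * B * Qs + m%:R * (8 * tau%:R * B)) + 2 * c * X4 =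
   c * (X1 + B + 4 * B * Qs + m%:R * (8 * tau%:R * B) + 2 * X4) by ring.
apply: ler_wpM2l => //; nra.
Qed.

Lemma dp m : forall k p z, (k + m)%N = n -> (mexp Q m g p k z <= (Phi m (Sv p k z) z)%:E)%E.
Proof.
elim: m => [|m IH] k p z hk.
  rewrite addn0 in hk; subst k.
  rewrite /= hg lee_fin /Phi.
  have -> : \sum_j Sv p n z j * Am 0 j z = 0.
    by rewrite big1 // => j _; rewrite /Am big_geq // mulr0.
  rewrite mulr0 mul0r !addr0; exact: lexx.
have hk' : (k.+1 + m)%N = n by rewrite addSnnS.
rewrite /=.
set s := Sv p k z.
apply: (@le_trans _ _ (\int[Q z]_y (Phi m (Sv (upd p k z) k.+1 y) y)%:E)%E).
  apply: mono_int => y; [exact: mexp_ge0 | exact: IH].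
have ev y : Sv (upd p k z) k.+1 y = (fun j => s j + H j y).
  by apply/funext => j; rewrite Sv_step.
pose psi := fun y => c * (\sum_j s j ^+ 2 + B + 4 * B * \sum_(1 <= i < m.+1) q i
   + m%:R * (8 * tau%:R * B)) + \sum_j (2 * c * s j) * (H j y + Am m j y).
have bF j : bm (fun y => H j y + Am m j y) by apply: bmD => //; exact: bAm.
have bpsi : bm psi.
  by apply: bmD; [exact: bm_cst | apply: bm_sum => j; apply: bmZ].
apply: (@le_trans _ _ (\int[Q z]_y (psi y)%:E)%E).
  apply: mono_int => y.
    exact: le_trans (mexp_ge0 m (upd p k z) k.+1 y) (IH _ _ _ hk').
  rewrite lee_fin ev; exact: step2.
rewrite (IpE (Q1 z) bpsi) lee_fin /psi.
rewrite (@Ip_aff _ (Q1 z) _ (fun j => 2 * c * s j) (fun j y => H j y + Am m j y)) //.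
have e2 j : Ip (Q z) (fun y => H j y + Am m j y) = Am m.+1 j z.
  rewrite (IpD (Q1 z) (bH j) (bAm m j)); exact: Am_step.
apply: (le_trans _ (step4 m s z)); apply: lerD => //.
apply: ler_sum => j _; apply: eqle; congr (_ * _); exact: e2.
Qed.

Lemma final_bound (xi : probability T R) :
  (chain_expect Q xi n g <= (8 * tau%:R / n%:R * B)%:E)%E.
Proof.
rewrite /chain_expect.
apply: (@le_trans _ _ (\int[xi]_z (Phi n (Sv (fun _ => z) 0 z) z)%:E)%E).
  apply: mono_int => z; first exact: mexp_ge0.
  by apply: dp; rewrite add0n.
have ePhi z : Phi n (Sv (fun _ => z) 0 z) z = 8 * tau%:R / n%:R * B.
  have S0 : Sv (fun _ => z) 0 z = fun _ => 0.
    by apply/funext => j; rewrite /Sv big_geq.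
  rewrite /Phi S0.
  have -> : \sum_(j < d) (0 : R) ^+ 2 = 0 by rewrite big1 // => j _; rewrite expr0n.
  have -> : \sum_(j < d) (0 : R) * Am n j z = 0 by rewrite big1 // => j _; rewrite mul0r.
  have n0 : (n%:R : R) != 0 by rewrite pnatr_eq0 -lt0n.
  by field.
under eq_integral do rewrite ePhi.
rewrite integral_cst //.
have -> : (xi : {measure set T -> \bar R}) [set: T] = 1%E by exact: probability_setT.
by rewrite mule1.
Qed.

End P7.

Unset Implicit Arguments. Set Strict Implicit.

Theorem lemma1 (R : realType) (dT : measure_display) (T : measurableType dT)
  (dist : T -> T -> R) (Q : R.-pker T ~> T) (pi : probability T R) (tau : nat)
  (d : nat) (F : 'rV[R]_d -> T -> R) (sigma delta : R) :
  polish_borel dist ->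
  kinvariant Q pi ->
  (forall nu : probability T R, kinvariant Q nu ->
     forall A, measurable A -> nu A = pi A) ->
  (0 < tau)%N ->
  (forall (k : nat) (z z' : T),
     ((2%:R^-1)%:E * tv_norm (kpow Q k z) (kpow Q k z') <=
       ((4%:R^-1) ^+ (k %/ tau))%:E)%E) ->
  0 <= sigma -> 0 <= delta ->
  (forall x, measurable_fun setT (F x)) ->
  (forall x, pi.-integrable setT (fun z => (F x z)%:E)) ->
  (forall z x, differentiable (fun y => F y z) x) ->
  let f := fun x => fine (\int[pi]_z (F x z)%:E)%E in
  let gradF := fun x z => grad (fun y => F y z) x in
  (forall x, differentiable f x) ->
  (forall x (i : 'I_d), measurable_fun setT (fun z => gradF x z 0 i)) ->
  (forall x (i : 'I_d), (\int[pi]_z (gradF x z 0 i)%:E)%E = (grad f x 0 i)%:E) ->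
  (forall z x, sqnorm (gradF x z - grad f x)
                 <= sigma ^+ 2 + delta ^+ 2 * sqnorm (grad f x)) ->
  forall (n : nat) (x : 'rV[R]_d), (1 <= n)%N ->
    let g := fun p : nat -> T =>
      (sqnorm (n%:R^-1 *: (\sum_(1 <= i < n.+1) gradF x (p i)) - grad f x))%:E in
    (chain_expect Q pi n g
       <= ((8 * tau%:R / n%:R) * (sigma ^+ 2 + delta ^+ 2 * sqnorm (grad f x)))%:E)%E
    /\
    (forall xi : probability T R,
       chain_expect Q xi n g
       <= ((16 * (1 + (ln 4 ^+ 2)^-1) * tau%:R / n%:R)
             * (sigma ^+ 2 + delta ^+ 2 * sqnorm (grad f x)))%:E)%E.
Proof.
move=> _ inv _ tau0 mix s0 d0 mF iF dF f gradF df mG iG bnd n x n1 g.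
set B := sigma ^+ 2 + delta ^+ 2 * sqnorm (grad f x).
pose H := fun (j : 'I_d) z => gradF x z 0 j - grad f x 0 j.
have B0 : 0 <= B.
  rewrite /B addr_ge0 ?sqr_ge0 // mulr_ge0 ?sqr_ge0 //.
  by rewrite /sqnorm sumr_ge0 // => i _; exact: sqr_ge0.
have HB z : \sum_j (H j z) ^+ 2 <= B.
  apply: (le_trans _ (bnd z x)); apply: eqle; rewrite /sqnorm.
  by apply: eq_bigr => j _; rewrite /H !mxE.
have Hsq j z : (H j z) ^+ 2 <= B.
  apply: (le_trans _ (HB z)); rewrite (bigD1 j) //= lerDl.
  by apply: sumr_ge0 => i _; exact: sqr_ge0.
have Habs j z : `|H j z| <= 1 + B.
  have := Hsq j z; rewrite ler_norml => h; apply/andP; split; nra.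
have bgF j : bm (fun z => gradF x z 0 j).
  split; first exact: mG.
  exists (1 + B + `|grad f x 0 j|) => z.
  have -> : gradF x z 0 j = H j z + grad f x 0 j by rewrite /H subrK.
  apply: le_trans (ler_normD _ _) _; apply: lerD => //.
have bH j : bm (H j) by apply: bmB => //; exact: bm_cst.
have H0 j : Ip pi (H j) = 0.
  rewrite /H (IpB (probability_setT pi) (bgF j) (bm_cst _)) Ip_cst //; last exact: probability_setT.
  by rewrite /Ip iG /= subrr.
have hg p : g p = ((n%:R ^+ 2)^-1 * \sum_j (\sum_(1 <= i < n.+1) H j (p i)) ^+ 2)%:E.
  rewrite /g /sqnorm; congr EFin; rewrite mulr_sumr; apply: eq_bigr => j _.
  rewrite !mxE summxE /H sumrB sumr_const_nat subn1 /= -[_ *+ n]mulr_natr.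
  rewrite /grad !mxE.
  have n0 : (n%:R : R) != 0 by rewrite pnatr_eq0 -lt0n.
  by field.
have fb := final_bound inv tau0 mix bH H0 B0 HB n1 hg.
split; first exact: fb.
move=> xi; apply: le_trans (fb xi) _; rewrite lee_fin.
apply: ler_wpM2r => //; apply: ler_wpM2r; first by rewrite invr_ge0.
apply: ler_wpM2r => //.
have : 0 <= (ln 4 ^+ 2 : R)^-1 by rewrite invr_ge0 sqr_ge0.
lra.
Qed.
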